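(* Let $K\ge 2$, let $L_1,\dots,L_K:\mathbb{R}^d\to\mathbb{R}$ be twice differentiable, and let $\mu,\rho,\delta\ge 0$. Assume that every $L_k$ is $\mu$-smooth and $\rho$-Hessian Lipschitz. Let $\widehat{w}_1,\dots,\widehat{w}_{K-1}\in\mathbb{R}^d$ and let $H_1,\dots,H_{K-1}$ be symmetric $d\times d$ matrices with $\|H_k\|_2\le\mu$ and $\|H_k-\nabla^2L_k(\widehat{w}_k)\|_2\le\delta$ for all $k\in[K-1]$. Define \[ \widetilde{L}_{K-1}(w)=\sum_{k=1}^{K-1}\Big(L_k(\widehat{w}_k)+(w-\widehat{w}_k)^\top\nabla L_k(\widehat{w}_k)+\tfrac12(w-\widehat{w}_k)^\top H_k(w-\widehat{w}_k)\Big), \] $\widetilde{F}(w)=\frac1K\big(\widetilde{L}_{K-1}(w)+L_K(w)\big)$ and $F(w)=\frac1K\sum_{k=1}^K L_k(w)$. Let $w_0=\widehat{w}_{K-1}$ and $w_t=w_{t-1}-\eta\nabla\widetilde{F}(w_{t-1})$ for $t\ge1$, with step size $\eta>0$. Suppose that for some iteration $t\ge1$ and some $c>1$, \[ \|\nabla\widetilde{F}(w_{t-1})\|_2\ \ge\ \frac{c}{K}\sum_{k=1}^{K-1}\Big(\delta\|w_{t-1}-\widehat{w}_k\|_2+\rho\|w_{t-1}-\widehat{w}_k\|_2^2\Big), \] and that $\eta\le \frac{2(1-1/c)}{\mu}$. Then \[ F(w_t)\le F(w_{t-1})-\eta\Big(1-\frac1c-\frac{\mu\eta}{2}\Big)\|\nabla\widetilde{F}(w_{t-1})\|_2^2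 . \]
   Context: $\|\cdot\|_2$ denotes the Euclidean norm for vectors and the operator norm for matrices; $[N]=\{1,\dots,N\}$. A differentiable $f$ is $\mu$-smooth if $\|\nabla f(w)-\nabla f(w')\|_2\le\mu\|w-w'\|_2$ for all $w,w'$, and $\rho$-Hessian Lipschitz if $\|\nabla^2 f(w)-\nabla^2 f(w')\|_2\le\rho\|w-w'\|_2$ for all $w,w'$. The points $\widehat{w}_k$ represent the model parameters obtained at the end of task $k$ in continual learning, and $H_k$ an approximation of the Hessian of the $k$-th task loss there. *)

(* Defs.v *)
From HB Require Import structures.
From mathcomp Require Import all_boot all_order all_algebra.
From mathcomp Require Import all_classical all_reals all_analysis.
Set Implicit Arguments. Unset Strict Implicit. Unset Printing Implicit Defensive.
Import Order.TTheory GRing.Theory Num.Theory.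
Import numFieldNormedType.Exports.
Local Open Scope ring_scope.
Local Open Scope classical_set_scope.

Section Defs.
Variables (R : realType) (d : nat).

Definition dotv (u v : 'cV[R]_d) : R := (u^T *m v) 0 0.
Definition enorm (v : 'cV[R]_d) : R := Num.sqrt (\sum_i v i 0 ^+ 2).

Definition opnorm (A : 'M[R]_d) : R :=
  sup [set enorm (A *m v) | v in [set v : 'cV[R]_d | enorm v <= 1]].

Definition is_gradient (f : 'cV[R]_d -> R) (g : 'cV[R]_d -> 'cV[R]_d) : Prop :=
  forall w, differentiable f w /\ forall h, 'd f w h = dotv (g w) h.

Definition is_hessian (g : 'cV[R]_d -> 'cV[R]_d) (Hm : 'cV[R]_d -> 'M[R]_d) : Prop :=
  forall w, differentiable g w /\ forall h, 'd g w h = Hm w *m h.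

End Defs.

(* Main.v *)
Require Import Defs.
From HB Require Import structures.
From mathcomp Require Import all_boot all_order all_algebra.
From mathcomp Require Import all_classical all_reals all_analysis.
From mathcomp Require Import ring lra.
Import Order.TTheory GRing.Theory Num.Theory.
Import numFieldNormedType.Exports.
Local Open Scope ring_scope.

Section Vec.
Local Open Scope classical_set_scope.
Variables (R : realType) (d : nat).
Implicit Types (u v : 'cV[R]_d) (A : 'M[R]_d).

Lemma dotvE u v : dotv u v = \sum_i u i 0 * v i 0.
Proof. by rewrite /dotv !mxE; apply: eq_bigr => i _; rewrite mxE. Qed.

Lemma dotvC u v : dotv u v = dotv v u.
Proof. by rewrite !dotvE; apply: eq_bigr => i _; rewrite mulrC. Qed.

Lemma dotvDl u w v : dotv (u + w) v = dotv u v + dotv w v.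
Proof. by rewrite !dotvE -big_split; apply: eq_bigr => i _; rewrite mxE mulrDl. Qed.

Lemma dotvZl k u v : dotv (k *: u) v = k * dotv u v.
Proof. by rewrite !dotvE mulr_sumr; apply: eq_bigr => i _; rewrite mxE mulrA. Qed.

Lemma dotvNl u v : dotv (- u) v = - dotv u v.
Proof. by rewrite -scaleN1r dotvZl mulN1r. Qed.

Lemma dotvBl u w v : dotv (u - w) v = dotv u v - dotv w v.
Proof. by rewrite dotvDl dotvNl. Qed.

Lemma dotvDr u w v : dotv v (u + w) = dotv v u + dotv v w.
Proof. by rewrite !(dotvC v) dotvDl. Qed.

Lemma dotvZr k u v : dotv v (k *: u) = k * dotv v u.
Proof. by rewrite !(dotvC v) dotvZl. Qed.

Lemma dotv_mulmx A u v : dotv (A *m u) v = dotv u (A^T *m v).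
Proof. by rewrite /dotv trmx_mul mulmxA. Qed.

Lemma sumsq_ge0 v : 0 <= \sum_i v i 0 ^+ 2.
Proof. by apply: sumr_ge0 => i _; rewrite sqr_ge0. Qed.

Lemma enorm_ge0 v : 0 <= enorm v.
Proof. exact: sqrtr_ge0. Qed.

Lemma dotvv v : dotv v v = enorm v ^+ 2.
Proof. by rewrite sqr_sqrtr ?sumsq_ge0 // dotvE; apply: eq_bigr => i _; rewrite expr2. Qed.

Lemma enormZ k v : enorm (k *: v) = `|k| * enorm v.
Proof.
rewrite /enorm (eq_bigr (fun i => k ^+ 2 * v i 0 ^+ 2)); last first.
  by move=> i _; rewrite mxE exprMn.
by rewrite -mulr_sumr sqrtrM ?sqr_ge0 // sqrtr_sqr.
Qed.

Lemma enormN v : enorm (- v) = enorm v.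
Proof. by rewrite -scaleN1r enormZ normrN normr1 mul1r. Qed.

Lemma enorm0 : enorm (0 : 'cV[R]_d) = 0.
Proof. by rewrite -(scale0r (0 : 'cV[R]_d)) enormZ normr0 mul0r. Qed.

Lemma enorm_eq0 v : enorm v = 0 -> v = 0.
Proof.
move=> /eqP; rewrite sqrtr_eq0 => h.
have h0 : \sum_i v i 0 ^+ 2 = 0 by apply/le_anti; rewrite h sumsq_ge0.
apply/matrixP => i j; rewrite ord1 mxE.
have /psumr_eq0P H := h0.
have := H (fun i _ => sqr_ge0 (v i 0)) i isT.
by move/eqP; rewrite sqrf_eq0 => /eqP.
Qed.

Lemma CS u v : dotv u v <= enorm u * enorm v.
Proof.
set a := enorm u; set b := enorm v.
have a0 : 0 <= a by exact: enorm_ge0.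
have b0 : 0 <= b by exact: enorm_ge0.
have key : 2 * a * b * dotv u v <= 2 * (a * b) ^+ 2.
  have -> : 2 * (a * b) ^+ 2 = b ^+ 2 * \sum_i u i 0 ^+ 2 + a ^+ 2 * \sum_i v i 0 ^+ 2.
    rewrite /a /b /enorm exprMn !sqr_sqrtr ?sumsq_ge0 //; lra.
  rewrite dotvE !mulr_sumr -big_split /=; apply: ler_sum => i _.
  have := sqr_ge0 (b * u i 0 - a * v i 0); move=> h; nra.
have [ab0|ab0] := boolP (0 < a * b).
  have : 2 * (a * b) * dotv u v <= 2 * (a * b) * (a * b) by rewrite mulrA; lra.
  have h2 : 0 < 2 * (a * b) by rewrite mulr_gt0.
  by rewrite ler_pM2l.
have : a * b = 0 by apply/le_anti; rewrite mulr_ge0 // andbT leNgt.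
move/eqP; rewrite mulf_eq0 => /orP[] /eqP h.
  by rewrite (enorm_eq0 _ h) dotvE big1 ?mulr_ge0 // => i _; rewrite mxE mul0r.
by rewrite (enorm_eq0 _ h) dotvE big1 ?mulr_ge0 // => i _; rewrite mxE mulr0.
Qed.

Lemma CSN u v : - dotv u v <= enorm u * enorm v.
Proof. by rewrite -dotvNl -(enormN u) CS. Qed.

Lemma CSsq u v : dotv u v ^+ 2 <= enorm u ^+ 2 * enorm v ^+ 2.
Proof.
have h1 := CS u v; have h2 := CSN u v.
have h3 : 0 <= enorm u * enorm v by rewrite mulr_ge0 ?enorm_ge0.
rewrite -exprMn; nra.
Qed.

Lemma mx_bound A v :
  enorm (A *m v) <= Num.sqrt (\sum_i \sum_j A i j ^+ 2) * enorm v.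
Proof.
rewrite /enorm -sqrtrM; last by apply: sumr_ge0 => i _; apply: sumr_ge0 => j _; rewrite sqr_ge0.
rewrite ler_sqrt; last first.
  by rewrite mulr_ge0 ?sumsq_ge0 //; apply: sumr_ge0 => i _; apply: sumr_ge0 => j _; rewrite sqr_ge0.
rewrite mulr_suml; apply: ler_sum => i _.
have E1 : (A *m v) i 0 = dotv (row i A)^T v.
  by rewrite dotvE mxE; apply: eq_bigr => j _; rewrite !mxE.
have E2 : \sum_j A i j ^+ 2 = enorm (row i A)^T ^+ 2.
  by rewrite sqr_sqrtr ?sumsq_ge0 //; apply: eq_bigr => j _; rewrite !mxE.
rewrite E1 E2 -(sqr_sqrtr (sumsq_ge0 v)); exact: CSsq.
Qed.

Lemma opnorm_bound A v : enorm (A *m v) <= opnorm A * enorm v.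
Proof.
set S := [set enorm (A *m v0) | v0 in [set v0 : 'cV[R]_d | enorm v0 <= 1]]%classic.
have ub : forall y, S y -> y <= opnorm A.
  move=> y Sy; apply: ub_le_sup => //.
  exists (Num.sqrt (\sum_i \sum_j A i j ^+ 2)) => z [v0 /= hv0 <-].
  apply: le_trans (mx_bound A v0) _.
  rewrite -[X in _ <= X]mulr1 ler_wpM2l //; exact: sqrtr_ge0.
have [/eqP n0|n0] := boolP (enorm v == 0).
  by rewrite (enorm_eq0 _ n0) mulmx0 enorm0 mulr0.
have np : 0 < enorm v by rewrite lt_neqAle eq_sym n0 enorm_ge0.
have hu : enorm ((enorm v)^-1 *: v) = 1.
  by rewrite enormZ ger0_norm ?invr_ge0 ?enorm_ge0 // mulVf.
have hS : S (enorm (A *m ((enorm v)^-1 *: v))).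
  by exists ((enorm v)^-1 *: v) => //=; rewrite hu.
have := ub _ hS; rewrite -scalemxAr enormZ ger0_norm ?invr_ge0 ?enorm_ge0 // => H.
have -> : enorm (A *m v) = enorm v * ((enorm v)^-1 * enorm (A *m v)).
  by rewrite mulrA mulfV // mul1r.
by rewrite [X in X <= _]mulrC ler_wpM2r ?enorm_ge0.
Qed.
End Vec.
Arguments CS {R d}.
Arguments CSN {R d}.
Arguments enorm_ge0 {R d}.
Arguments opnorm_bound {R d}.
Arguments enormZ {R d}.
Arguments dotvC {R d}.
Arguments dotv_mulmx {R d}.


Section Calc.
Local Open Scope classical_set_scope.
Variable R : realType.

Lemma line_derive (V W : normedModType R) (f : V -> W) a b s :
  differentiable f (s *: b + a) ->
  is_derive s 1 (fun r : R => f (r *: b + a)) ('d f (s *: b + a) b).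
Proof.
move=> df.
have E : (fun h : R => h^-1 *: (((fun r : R => f (r *: b + a)) \o shift s) (h *: 1) - f (s *: b + a)))
   = (fun h : R => h^-1 *: ((f \o shift (s *: b + a)) (h *: b) - f (s *: b + a))).
  apply/funext => h /=; congr (_ *: (f _ - _)).
  by rewrite [h *: 1]mulr1 scalerDl addrA.
have dv := @diff_derivable _ _ _ _ _ b df.
apply: DeriveDef; first by rewrite /derivable E.
by rewrite /derive E -(@deriveE _ _ _ _ _ b df).
Qed.

Lemma taylor1 (phi dphi : R -> R) (M : R) :
  (forall s : R, is_derive s (1 : R) phi (dphi s)) ->
  (forall s : R, 0 < s < 1 -> dphi s - dphi 0 <= M * s) ->
  phi 1 - phi 0 - dphi 0 <= M / 2.
Proof.
move=> hd hb.
pose psi := fun x : R => phi x - x * dphi 0 - M / 2 * (x * x).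
have dpsi : forall s : R, is_derive s (1:R) psi (dphi s - dphi 0 - M * s).
  move=> s.
  have h1 := is_deriveM (is_derive_id s (1:R)) (is_derive_cst (dphi 0) s (1:R)).
  have h2 := is_deriveM (is_derive_id s (1:R)) (is_derive_id s (1:R)).
  have h3 := is_deriveM (is_derive_cst (M / 2) s (1:R)) h2.
  have h4 := is_deriveB (is_deriveB (hd s) h1) h3.
  have e : psi = (phi - id * cst (dphi 0) - cst (M / 2) * (id * id)) by [].
  rewrite e; apply: (is_derive_eq h4).
  rewrite /= !scaler0 !add0r !addr0 ![_%:A]mulr1 /cst; rewrite /GRing.scale /=; lra.
have cpsi : {within `[0, 1], continuous psi}.
  apply: derivable_within_continuous => x _.
  by have [] := dpsi x.
have [c cin E] := MVT ltr01 (fun x _ => dpsi x) cpsi.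
move: cin; rewrite in_itv /= => c01.
have hc := hb c c01.
move: E; rewrite /psi /=; lra.
Qed.

Lemma line_dot_derive d (G : 'cV[R]_d -> 'cV[R]_d) (DG : 'cV[R]_d -> 'M[R]_d) a b u s :
  is_hessian G DG ->
  is_derive s (1:R) (fun r : R => dotv (G (r *: b + a)) u) (dotv (DG (s *: b + a) *m b) u).
Proof.
move=> hG.
have [dG eG] := hG (s *: b + a).
have hl := @line_derive _ _ G a b s dG.
rewrite eG in hl.
set Gam := (fun r : R => G (r *: b + a)) in hl.
have dv : derivable Gam s 1 by case: hl.
have hi : forall i, is_derive s (1:R) (fun r => Gam r i 0) ((DG (s *: b + a) *m b) i 0).
  move=> i; have dvi := (derivable_mxP Gam s 1).1 dv i 0.
  apply: DeriveDef => //.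
  by rewrite -(@derive_val _ _ _ _ _ _ _ hl) (derive_mx dv) mxE.
have e : (fun r : R => dotv (G (r *: b + a)) u) = \sum_(i < d) (u i 0 \*: (fun r => Gam r i 0)).
  by rewrite fct_sumE; apply/funext => r; rewrite dotvE; apply: eq_bigr => i _; rewrite mulrC.
rewrite e; apply: (is_derive_eq (is_derive_sum (fun i => is_deriveZ (u i 0) (hi i)))).
by rewrite dotvE; apply: eq_bigr => i _; rewrite mulrC.
Qed.

Lemma smooth_step d (f : 'cV[R]_d -> R) g mu x v :
  is_gradient f g -> (forall u w, enorm (g u - g w) <= mu * enorm (u - w)) ->
  f (v + x) - f x - dotv (g x) v <= mu * enorm v ^+ 2 / 2.
Proof.
move=> hg hL.
have hd : forall s : R, is_derive s (1:R) (fun r : R => f (r *: v + x)) (dotv (g (s *: v + x)) v).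
  move=> s; have [df ef] := hg (s *: v + x).
  by rewrite -ef; apply: line_derive.
have := @taylor1 _ _ (mu * enorm v ^+ 2) hd.
rewrite scale1r scale0r add0r; apply.
move=> s /andP[s0 s1].
rewrite -dotvBl (le_trans (CS _ _)) //.
apply: le_trans (ler_wpM2r (enorm_ge0 _) (hL _ _)) _.
rewrite addrK enormZ (ger0_norm (ltW s0)).
by rewrite le_eqVlt; apply/orP; left; apply/eqP; rewrite expr2; ring.
Qed.

Lemma hess_step d (gf : 'cV[R]_d -> 'cV[R]_d) (Hf : 'cV[R]_d -> 'M[R]_d) rho delta
   a p v (H0 : 'M[R]_d) :
  is_hessian gf Hf -> (forall u w, opnorm (Hf u - Hf w) <= rho * enorm (u - w)) ->
  opnorm (H0 - Hf a) <= delta ->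
  dotv (gf (p + a)) v - dotv (gf a + H0 *m p) v <=
     (delta * enorm p + rho / 2 * enorm p ^+ 2) * enorm v.
Proof.
move=> hH hL hd.
have := @taylor1 _ _ (rho * enorm p ^+ 2 * enorm v)
   (fun s => @line_dot_derive d gf Hf a p v s hH).
rewrite scale1r scale0r add0r => T.
have T1 : dotv (gf (p + a)) v - dotv (gf a) v - dotv (Hf a *m p) v <=
    rho * enorm p ^+ 2 * enorm v / 2.
  apply: T => s /andP[s0 s1].
  rewrite -dotvBl -mulmxBl (le_trans (CS _ _)) //.
  apply: le_trans (ler_wpM2r (enorm_ge0 _) (opnorm_bound _ _)) _.
  apply: le_trans (ler_wpM2r (enorm_ge0 _) (ler_wpM2r (enorm_ge0 _) (hL _ _))) _.
  rewrite addrK enormZ (ger0_norm (ltW s0)).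
  by rewrite le_eqVlt; apply/orP; left; apply/eqP; rewrite expr2; ring.
have T2 : - dotv ((H0 - Hf a) *m p) v <= delta * enorm p * enorm v.
  apply: le_trans (CSN _ _) _.
  apply: (ler_wpM2r (enorm_ge0 _)).
  apply: le_trans (opnorm_bound _ _) _.
  exact: (ler_wpM2r (enorm_ge0 _) hd).
move: T1 T2; rewrite mulmxBl dotvBl dotvDl; lra.
Qed.

Lemma quad_derive (A B C : R) (phiL : R -> R) dL :
  is_derive (0:R) (1:R) phiL dL ->
  is_derive (0:R) (1:R) (fun r => A + r * B + r * r * C + phiL r) (B + dL).
Proof.
move=> hL.
have h1 := is_deriveM (is_derive_id (0:R) (1:R)) (is_derive_cst B (0:R) (1:R)).
have h2 := is_deriveM (is_deriveM (is_derive_id (0:R) (1:R)) (is_derive_id (0:R) (1:R)))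
             (is_derive_cst C (0:R) (1:R)).
have h := is_deriveD (is_deriveD (is_deriveD (is_derive_cst A (0:R) (1:R)) h1) h2) hL.
have e : (fun r => A + r * B + r * r * C + phiL r) = (cst A + id * cst B + id * id * cst C + phiL) by [].
rewrite e; apply: (is_derive_eq h).
rewrite /= !scaler0 !add0r ![_%:A]mulr1 /cst /GRing.scale /=; lra.
Qed.

Lemma line_derive0 (V W : normedModType R) (f : V -> W) a b :
  differentiable f a ->
  is_derive (0:R) (1:R) (fun r : R => f (r *: b + a)) ('d f a b).
Proof.
move=> df; have := @line_derive V W f a b 0; rewrite scale0r add0r; apply; exact: df.
Qed.
End Calc.
Arguments quad_derive {R}.
Arguments line_derive0 {R}.
Arguments hess_step {R}.
Arguments smooth_step {R}.


Theorem theorem1 (R : realType) (d K : nat)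
  (L : nat -> 'cV[R]_d -> R) (gL : nat -> 'cV[R]_d -> 'cV[R]_d)
  (HL : nat -> 'cV[R]_d -> 'M[R]_d)
  (mu rho delta : R)
  (wh : nat -> 'cV[R]_d) (H : nat -> 'M[R]_d)
  (gFt : 'cV[R]_d -> 'cV[R]_d)
  (eta c : R) (w : nat -> 'cV[R]_d) (t : nat) :
  (2 <= K)%N ->
  0 <= mu -> 0 <= rho -> 0 <= delta ->
  (* L_1..L_K twice differentiable, gradients gL k, Hessians HL k *)
  (forall k, (1 <= k <= K)%N -> is_gradient (L k) (gL k) /\ is_hessian (gL k) (HL k)) ->
  (* mu-smooth *)
  (forall k, (1 <= k <= K)%N -> forall u v,
      enorm (gL k u - gL k v) <= mu * enorm (u - v)) ->
  (* rho-Hessian Lipschitz *)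
  (forall k, (1 <= k <= K)%N -> forall u v,
      opnorm (HL k u - HL k v) <= rho * enorm (u - v)) ->
  (* H_1..H_{K-1} symmetric approximations *)
  (forall k, (1 <= k <= K.-1)%N ->
      (H k)^T = H k /\ opnorm (H k) <= mu /\
      opnorm (H k - HL k (wh k)) <= delta) ->
  (* gFt is the gradient of F~ *)
  is_gradient
    (fun x => K%:R^-1 *
       ((\sum_(1 <= k < K) (L k (wh k) + dotv (x - wh k) (gL k (wh k))
            + 2^-1 * dotv (x - wh k) (H k *m (x - wh k)))) + L K x))
    gFt ->
  0 < eta ->
  w 0%N = wh K.-1 ->
  (forall s, w s.+1 = w s - eta *: gFt (w s)) ->
  (1 <= t)%N ->
  1 < c ->
  enorm (gFt (w t.-1)) >=
    c / K%:R * \sum_(1 <= k < K)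
       (delta * enorm (w t.-1 - wh k) + rho * enorm (w t.-1 - wh k) ^+ 2) ->
  eta <= 2 * (1 - c^-1) / mu ->
  let F := fun x => K%:R^-1 * \sum_(1 <= k < K.+1) L k x in
  F (w t) <= F (w t.-1) - eta * (1 - c^-1 - mu * eta / 2) * enorm (gFt (w t.-1)) ^+ 2.

Proof.
move=> K2 mu0 rho0 delta0 hLk hsm hHl hH hgr eta0 w0 wS t1 c1 hG heta.
cbv zeta.

have K1 : (1 <= K)%N by apply: leq_trans K2.
have wt : w t = - (eta *: gFt (w t.-1)) + w t.-1.
  by rewrite -{1}(prednK t1) wS addrC.
rewrite wt.
set x := w t.-1 in hG *.
set g := gFt x in hG *.
set v := - (eta *: g).
have Kpos : 0 < K%:R :> R by rewrite ltr0n; apply: leq_trans K2.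
set G := enorm g in hG *.
have G0 : 0 <= G by exact: enorm_ge0.
have nv : enorm v = eta * G by rewrite /v enormN enormZ ger0_norm ?ltW.
have gv : dotv g v = - (eta * G ^+ 2).
  by rewrite /v dotvC dotvNl dotvZl dotvv.
have S1 : \sum_(1 <= k < K.+1) L k (v + x) - \sum_(1 <= k < K.+1) L k x <=
    \sum_(1 <= k < K.+1) dotv (gL k x) v + K%:R * (mu * enorm v ^+ 2 / 2).
  have -> : K%:R * (mu * enorm v ^+ 2 / 2) = \sum_(1 <= k < K.+1) (mu * enorm v ^+ 2 / 2).
    by rewrite sumr_const_nat subn1 /= mulr_natl.
  rewrite -sumrB -big_split /=; apply: ler_sum_nat => k /andP[k1 kK].
  have hk : (1 <= k <= K)%N by rewrite k1 -ltnS.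
  have := @smooth_step _ _ (L k) (gL k) mu x v (hLk k hk).1 (hsm k hk); lra.

pose p k := x - wh k.
pose A k := L k (wh k) + dotv (p k) (gL k (wh k)) + 2^-1 * dotv (p k) (H k *m p k).
pose B k := dotv v (gL k (wh k)) + 2^-1 * (dotv v (H k *m p k) + dotv (p k) (H k *m v)).
pose C k := 2^-1 * dotv v (H k *m v).
have Qe : forall k r, L k (wh k) + dotv (r *: v + x - wh k) (gL k (wh k)) +
    2^-1 * dotv (r *: v + x - wh k) (H k *m (r *: v + x - wh k)) = A k + r * B k + r * r * C k.
  move=> k r; rewrite /A /B /C.
  have -> : r *: v + x - wh k = r *: v + p k by rewrite /p addrA.
  rewrite mulmxDr -scalemxAr !dotvDl !dotvDr !dotvZl !dotvZr; ring.
have GI : dotv g v = K%:R^-1 * (\sum_(1 <= k < K) B k + dotv (gL K x) v).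
  have [dF eF] := hgr x.
  have D1 := @line_derive0 _ _ _ _ x v dF.
  rewrite eF in D1.
  move: D1; set phi := (fun r : R => _) => D1.
  have e : phi = K%:R^-1 \*: (fun r => \sum_(1 <= k < K) A k + r * \sum_(1 <= k < K) B k
        + r * r * \sum_(1 <= k < K) C k + L K (r *: v + x)).
    apply/funext => r; rewrite /phi /=; congr (_ * (_ + _)).
    by rewrite (eq_bigr _ (fun k _ => Qe k r)) 2!big_split /= -!mulr_sumr.
  have hKK : (1 <= K <= K)%N by rewrite K1 leqnn.
  have [dLK eLK] := (hLk K hKK).1 x.
  have D2 := is_deriveZ K%:R^-1 (@quad_derive _ (\sum_(1 <= k < K) A k) (\sum_(1 <= k < K) B k)
        (\sum_(1 <= k < K) C k) _ _ (@line_derive0 _ _ _ _ x v dLK)).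
  rewrite eLK -e in D2.
  have u1 := @derive_val _ _ _ _ _ _ _ D1.
  have u2 := @derive_val _ _ _ _ _ _ _ D2.
  by rewrite -u1 u2.
have Bk : forall k, (1 <= k < K)%N -> B k = dotv (gL k (wh k) + H k *m (x - wh k)) v.
  move=> k /andP[k1 kK].
  have hk' : (1 <= k <= K.-1)%N by rewrite k1 -ltnS prednK.
  have [sym _] := hH k hk'.
  rewrite /B /p (dotvC v (gL k (wh k))) (dotvC v (H k *m _)).
  have e1 : dotv (x - wh k) (H k *m v) = dotv (H k *m (x - wh k)) v.
    by rewrite [LHS]dotvC dotv_mulmx sym dotvC.
  have e2 : dotv (H k *m v) (x - wh k) = dotv (H k *m (x - wh k)) v.
    by rewrite dotv_mulmx sym dotvC.
  rewrite (dotvC (x - wh k) (H k *m v)) dotv_mulmx sym.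
  rewrite ?e1 ?e2 dotvDl; lra.
have S2 : \sum_(1 <= k < K.+1) dotv (gL k x) v - K%:R * dotv g v <=
    \sum_(1 <= k < K) (delta * enorm (x - wh k) + rho * enorm (x - wh k) ^+ 2) * enorm v.
  rewrite GI mulrA mulfV ?gt_eqF // mul1r big_nat_recr //= (eq_big_nat _ _ Bk).
  suff : \sum_(1 <= k < K) dotv (gL k x) v - \sum_(1 <= k < K) dotv (gL k (wh k) + H k *m (x - wh k)) v <=
    \sum_(1 <= k < K) (delta * enorm (x - wh k) + rho * enorm (x - wh k) ^+ 2) * enorm v by lra.
  rewrite -sumrB; apply: ler_sum_nat => k /andP[k1 kK].
  have hk : (1 <= k <= K)%N by rewrite k1 ltnW.
  have hk' : (1 <= k <= K.-1)%N by rewrite k1 -ltnS prednK.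
  have [_ [_ hd]] := hH k hk'.
  have := @hess_step _ _ (gL k) (HL k) rho delta (wh k) (x - wh k) v (H k) (hLk k hk).2 (hHl k hk) hd.
  rewrite subrK => h; apply: le_trans h _.
  apply: (ler_wpM2r (enorm_ge0 _)).
  have := mulr_ge0 rho0 (sqr_ge0 (enorm (x - wh k))); lra.
set S := \sum_(1 <= k < K) (delta * enorm (x - wh k) + rho * enorm (x - wh k) ^+ 2) in hG S2.
rewrite -mulr_suml -/S in S2.
have c0 : 0 < c by lra.
have HS : S <= K%:R / c * G.
  have -> : S = K%:R / c * (c / K%:R * S) by field; rewrite ?gt_eqF.
  by rewrite ler_wpM2l // divr_ge0 // ltW.
have HS' : S * enorm v <= K%:R / c * G * (eta * G).
  by rewrite nv; apply: (ler_wpM2r (mulr_ge0 (ltW eta0) G0)).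
rewrite nv gv in S1 S2.
have Hdiff : \sum_(1 <= k < K.+1) L k (v + x) - \sum_(1 <= k < K.+1) L k x <=
    K%:R * (- (eta * (1 - c^-1 - mu * eta / 2) * G ^+ 2)).
  move: S1 S2 HS'; rewrite nv; move=> S1 S2 HS'.
  have E : K%:R / c * G * (eta * G) = K%:R * (c^-1 * eta * G ^+ 2) by rewrite expr2; ring.
  rewrite E in HS'.
  have E2 : K%:R * (mu * (eta * G) ^+ 2 / 2) = K%:R * (mu * eta ^+ 2 * G ^+ 2 / 2) by rewrite expr2; ring.
  rewrite E2 in S1.
  have E3 : K%:R * (- (eta * (1 - c^-1 - mu * eta / 2) * G ^+ 2)) =
     K%:R * - (eta * G ^+ 2) + K%:R * (c^-1 * eta * G ^+ 2) + K%:R * (mu * eta ^+ 2 * G ^+ 2 / 2).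
    by rewrite !expr2; ring.
  rewrite E3; lra.
have Kinv : 0 <= (K%:R : R)^-1 by rewrite invr_ge0 ltW.
have := ler_wpM2l Kinv Hdiff.
rewrite mulrA mulVf ?gt_eqF // mul1r mulrBr; lra.
Qed.
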